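(* Let $p\neq 2$ be a prime and $G=Z_{p^{\lambda_1}}\times\cdots\times Z_{p^{\lambda_n}}$ with $0<\lambda_1<\cdots<\lambda_n$. For a canonical tuple $\mathbf a$, the subgroup $R(\mathbf a)$ is a join-irreducible element of $\mathrm{Char}(G)$ if and only if $\mathbf a$ has precisely one nondegenerate coordinate.
   Context: $\mathrm{Char}(G)$ is the lattice of characteristic subgroups of $G$; an element of a finite lattice is join-irreducible if it is not the bottom element and is not the join of two elements each strictly below it. Set $\lambda_0=0$ and $a_0=0$. Tuples are ordered componentwise; for $\mathbf 0\le\mathbf a\le(\lambda_1,\dots,\lambda_n)$, $T(\mathbf a)$ is the set of $(g_1,\dots,g_n)\in G$ with $|g_i|=p^{a_i}$, and $R(\mathbf a)=\bigcup_{\mathbf b\le\mathbf a}T(\mathbf b)$. $\mathbf a$ is canonical if (I) $a_i\ge a_{i-1}$ for $i\in\{2,\dots,n\}$ and (II) $a_{i+1}-a_i\le\lambda_{i+1}-\lambda_i$ for $i\in\{1,\dots,n-1\}$; then $R(\mathbf a)$ is characteristic. A canonical $\mathbf a$ is degenerate at coordinate $i$ if $a_i=a_{i-1}$, or ($i\le n-1$ and) $a_{i+1}-a_i=\lambda_{i+1}-\lambda_i$; otherwise $i$ is nondegenerate. *)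

(* Defs.v *)
From HB Require Import structures.
From mathcomp Require Import all_boot all_order all_algebra all_fingroup all_solvable.

Unset Implicit Arguments.
Unset Strict Implicit.
Unset Printing Implicit Defensive.

Import GRing.Theory.

(* Conventions: the exponents lambda_1 < ... < lambda_n and tuples a_1..a_n
   are given as functions nat -> nat, read at the 1-based indices 1..n;
   the values at index 0 are replaced by the convention lambda_0 = a_0 = 0
   through [ext0]; values at indices > n are never used. *)
Definition ext0 (f : nat -> nat) (i : nat) : nat := if i is 0 then 0 else f i.

(* Ambient finite abelian group: row vectors of length n over Z_N with
   N = p^lambda_n, under coordinatewise addition (its canonical additive
   finGroupType); coordinate i.+1 (1-based) of g is g ord0 i. *)
Notation amb p n lam := (matrix 'Z_(p ^ lam n) 1 n).

(* The standard generator of the i-th factor (i : 'I_n is the 0-based index of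
   coordinate i.+1): the element p^(lambda_n - lambda_{i+1}) in coordinate i,
   which has order p^lambda_{i+1} in Z_(p^lambda_n). *)
Definition gen_e (p n : nat) (lam : nat -> nat) (i : 'I_n) : amb p n lam :=
  \row_(j < n) (if j == i then (((p ^ (lam n - lam i.+1))%:R)%R : 'Z_(p ^ lam n))
                 else 0%R).

(* G = Z_{p^lambda_1} x ... x Z_{p^lambda_n}, realised as the (internal direct)
   product of the cyclic subgroups <gen_e i>, i.e. the subgroup they generate. *)
Definition Ggrp (p n : nat) (lam : nat -> nat) : {group amb p n lam} :=
  <<[set gen_e p n lam i | i : 'I_n]>>%G.

Definition zorder (N : nat) (x : 'Z_N) : nat := #[x]%g.

Definition Tset (p n : nat) (lam : nat -> nat) (b : nat -> nat) : {set amb p n lam} :=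
  [set g in Ggrp p n lam |
     [forall i : 'I_n, zorder _ (g ord0 i) == p ^ b i.+1]].

(* R(a) = union of T(b) over all tuples b with 0 <= b <= a (componentwise).
   Since the conditions on b are coordinatewise, "g lies in T(b) for some
   b <= a" is written as: for every coordinate i there is b_i <= a_i with
   |g_i| = p^(b_i). *)
Definition Rset (p n : nat) (lam : nat -> nat) (a : nat -> nat) : {set amb p n lam} :=
  [set g in Ggrp p n lam |
     [forall i : 'I_n, [exists b : 'I_(a i.+1).+1, zorder _ (g ord0 i) == p ^ b]]].

Definition tuple_le_lam (n : nat) (lam a : nat -> nat) : Prop :=
  forall i, 1 <= i <= n -> a i <= lam i.

Definition canonical_tuple (n : nat) (lam a : nat -> nat) : Prop :=
  (forall i, 2 <= i <= n -> ext0 a (i.-1) <= ext0 a i) /\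
  (forall i, 1 <= i <= n - 1 -> a i.+1 - a i <= lam i.+1 - lam i).

Definition degenerate (n : nat) (lam a : nat -> nat) (i : nat) : Prop :=
  ext0 a i = ext0 a i.-1 \/ (i <= n - 1 /\ a i.+1 - a i = lam i.+1 - lam i).

Definition nondegenerate (n : nat) (lam a : nat -> nat) (i : nat) : Prop :=
  ~ degenerate n lam a i.

Definition unique_nondegenerate (n : nat) (lam a : nat -> nat) : Prop :=
  exists i, (1 <= i <= n) /\ nondegenerate n lam a i /\
    forall j, 1 <= j <= n -> nondegenerate n lam a j -> j = i.

Local Open Scope group_scope.

Definition in_Char {gT : finGroupType} (G : {group gT}) (H : {set gT}) : Prop :=
  group_set H /\ H \char G.

Definition char_join_irreducible {gT : finGroupType} (G : {group gT})
    (H : {set gT}) : Prop :=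
  in_Char G H /\ H != 1%g /\
  ~ (exists K L : {group gT},
       [/\ K \char G, L \char G, K \proper H, L \proper H &
           forall M : {group gT}, M \char G -> K \subset M -> L \subset M ->
             H \subset M]).

(* Main.v *)
From Pilot Require Import Defs.
From mathcomp Require Import all_boot all_order all_algebra all_fingroup all_solvable.
From mathcomp Require Import zify ring.
From Stdlib Require Import Classical_Prop.

Module PartA.
Set Implicit Arguments. Unset Strict Implicit. Unset Printing Implicit Defensive.
Import GRing.Theory.
Local Open Scope ring_scope.

Section Arith.
Variables p L : nat.
Hypothesis pr : prime p.
Hypothesis Lpos : (0 < L)%N.
Local Notation N := (p ^ L)%N.

Lemma N_gt1 : (1 < N)%N.
Proof. by rewrite -(expn0 p) ltn_exp2l ?prime_gt1. Qed.

Lemma valN k : ((k%:R : 'Z_N) : nat) = (k %% N)%N.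
Proof. exact: (val_Zp_nat N_gt1). Qed.

Lemma zN (x : 'Z_N) : x = (x : nat)%:R.
Proof. by rewrite natr_Zp. Qed.

Lemma ltN (x : 'Z_N) : ((x : nat) < N)%N.
Proof. by rewrite -[X in (_ < X)%N](Zp_cast N_gt1) ltn_ord. Qed.

Definition dv e (x : 'Z_N) := (p ^ e %| x)%N.

Lemma dvR e k : (e <= L)%N -> dv e (k%:R) = (p ^ e %| k)%N.
Proof.
move=> le; rewrite /dv valN /dvdn.
by rewrite -(modn_dvdm k (dvdn_exp2l p le)).
Qed.

Lemma dvD e x y : (e <= L)%N -> dv e x -> dv e y -> dv e (x + y).
Proof. by move=> le hx hy; rewrite (zN x) (zN y) -natrD dvR // dvdn_add. Qed.

Lemma dvM e x y : (e <= L)%N -> dv e y -> dv e (x * y).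
Proof. by move=> le hy; rewrite (zN x) (zN y) -natrM dvR // dvdn_mull. Qed.

Lemma dvMl e x y : (e <= L)%N -> dv e x -> dv e (x * y).
Proof. by move=> le hx; rewrite mulrC dvM. Qed.

Lemma dvMn e x k : (e <= L)%N -> dv e x -> dv e (x *+ k).
Proof. by move=> le hx; rewrite (zN x) -[_ *+ k]mulr_natr -natrM dvR // dvdn_mulr. Qed.

Lemma ZN0 : (N%:R : 'Z_N) = 0.
Proof. by apply: ord_inj; rewrite valN modnn. Qed.

Lemma dvN e x : (e <= L)%N -> dv e x -> dv e (- x).
Proof.
move=> le hx.
have -> : - x = (N - x)%:R by rewrite natrB ?ZN0 ?sub0r -?zN // ltnW ?ltN.
by rewrite dvR // dvdn_sub // dvdn_exp2l.
Qed.

Lemma dv_mono e e' x : (e' <= e)%N -> dv e x -> dv e' x.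
Proof. by move=> le hx; apply: dvdn_trans hx; rewrite dvdn_exp2l. Qed.

Lemma dv0 e : dv e 0.
Proof. by rewrite /dv dvdn0. Qed.

Lemma dvL x : dv L x -> x = 0.
Proof.
move=> h; apply: ord_inj => /=; have := ltN x; move: h; rewrite /dv.
case: (x : nat) => // m h lt; have := dvdn_leq (ltn0Sn m) h; by rewrite leqNgt lt.
Qed.

Lemma dv_pow e d t z : dv e z -> (t <= e + d)%N -> (t <= L)%N ->
  dv t ((p ^ d)%:R * z).
Proof.
move=> hz le1 le2; rewrite (zN z) -natrM dvR //.
apply: dvdn_trans (dvdn_exp2l p le1) _; rewrite expnD mulnC dvdn_mul //.
Qed.

Lemma natZ0 m : ((m%:R : 'Z_N) == 0) = (N %| m)%N.
Proof. by rewrite -val_eqE /= valN. Qed.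

Lemma killE c (x : 'Z_N) : (x *+ p ^ c == 0) = dv (L - c) x.
Proof.
rewrite {1}(zN x) -[_ *+ p ^ c]mulr_natr -natrM natZ0 /dv.
have pc : (0 < p ^ c)%N by rewrite expn_gt0 prime_gt0.
case: (leqP c L) => hc.
  by rewrite -{1}(subnK hc) expnD dvdn_pmul2r.
have -> : (L - c = 0)%N by apply/eqP; rewrite subn_eq0 ltnW.
by rewrite expn0 dvd1n dvdn_mull // dvdn_exp2l // ltnW.
Qed.

Lemma ordE c (x : 'Z_N) :
  [exists b : 'I_(c.+1), zorder _ x == (p ^ b)%N] = dv (L - c) x.
Proof.
rewrite -killE /zorder.
have -> : (x *+ p ^ c == 0) = (#[x]%g %| p ^ c)%N by rewrite order_dvdn.
apply/existsP/idP => [[b /eqP ->]|].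
  by rewrite dvdn_exp2l // -ltnS ltn_ord.
case/(dvdn_pfactor _ _ pr) => m lem ->.
by exists (Ordinal (lem : (m < c.+1)%N)).
Qed.

Lemma dvR2 e k : (e <= L)%N -> (p ^ e %| k)%N -> dv e (k%:R).
Proof. by move=> le h; rewrite dvR. Qed.

End Arith.

End PartA.

Module PartB.
Import PartA.
Set Implicit Arguments. Unset Strict Implicit. Unset Printing Implicit Defensive.
Import GRing.Theory FinRing.Theory.
Local Open Scope ring_scope.
Section Vec.
Variables (p n : nat) (lam : nat -> nat).
Hypothesis pr : prime p.
Hypothesis lam1 : (0 < lam 1)%N.
Hypothesis lamI : forall i, (1 <= i < n)%N -> (lam i < lam i.+1)%N.
Hypothesis npos : (0 < n)%N.

Lemma lam_lt i j : (1 <= i)%N -> (i < j)%N -> (j <= n)%N -> (lam i < lam j)%N.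
Proof.
move=> hi; elim: j => // j IH hij hj.
have hl : (lam j < lam j.+1)%N by apply: lamI; lia.
case: (ltnP i j) => [lt|ge]; first by apply: ltn_trans hl; apply: IH => //; apply: ltnW.
by have -> : i = j by lia.
Qed.

Lemma lam_le i j : (1 <= i)%N -> (i <= j)%N -> (j <= n)%N -> (lam i <= lam j)%N.
Proof.
move=> hi; rewrite leq_eqVlt => /orP[/eqP-> //|lt] hj.
by apply: ltnW; apply: lam_lt.
Qed.

Lemma Lpos : (0 < lam n)%N.
Proof. by apply: leq_trans lam1 (lam_le _ _ _). Qed.

Lemma lamL (k : 'I_n) : (lam k.+1 <= lam n)%N.
Proof. exact: lam_le. Qed.

Local Notation N := (p ^ lam n)%N.
Local Notation L := (lam n).
Local Notation V := ('M['Z_N]_(1, n)).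
Local Notation dvv := (@dv p L).
Let dvD' := dvD pr Lpos.
Let dvM' := dvM pr Lpos.
Let dvMl' := dvMl pr Lpos.
Let dvMn' := dvMn pr Lpos.
Let dvN' := dvN pr Lpos.
Let dv0' := dv0 p L.
Let dvL' := dvL pr Lpos.
Let dvR2' := dvR2 pr Lpos.
Let zN' := @zN p L.

Definition dl (k : 'I_n) (x : 'Z_N) : V := \row_(j < n) (if j == k then x else 0).

Definition Rs (b : nat -> nat) : {set V} :=
  [set g : V | [forall k : 'I_n, dvv (L - b k.+1) (g ord0 k)]].

Lemma inRs b g : (g \in Rs b) = [forall k : 'I_n, dvv (L - b k.+1) (g ord0 k)].
Proof. by rewrite inE. Qed.

Lemma Rs_group b : group_set (Rs b).
Proof.
apply/group_setP; split.
  by rewrite inRs; apply/forallP => k; rewrite mxE dv0'.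
move=> x y; rewrite !inRs => /forallP hx /forallP hy.
apply/forallP => k; rewrite zmodMgE mxE dvD' ?leq_subr //.
Qed.

Canonical Rg b := Group (Rs_group b).

Lemma dlE k x j : dl k x ord0 j = if j == k then x else 0.
Proof. by rewrite mxE. Qed.

Lemma dl_in b k x : (dl k x \in Rs b) = dvv (L - b k.+1) x.
Proof.
rewrite inRs; apply/forallP/idP => [/(_ k)|h j]; first by rewrite dlE eqxx.
by rewrite dlE; case: eqP => [->|]; rewrite ?dv0'.
Qed.

Lemma dlD k x y : dl k (x + y) = dl k x + dl k y.
Proof. by apply/matrixP => i j; rewrite !mxE; case: eqP; rewrite ?addr0. Qed.

Lemma dlMn k x m : dl k (x *+ m) = dl k x *+ m.
Proof. by apply/matrixP => i j; rewrite mulmxnE !mxE; case: eqP; rewrite ?mul0rn. Qed.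

Lemma dl0 k : dl k 0 = 0.
Proof. by apply/matrixP => i j; rewrite !mxE; case: eqP. Qed.

Lemma dl_sum (g : V) : g = \sum_(k < n) dl k (g ord0 k).
Proof.
apply/matrixP => i j; rewrite summxE (ord1 i) (bigD1 j) //= dlE eqxx big1 ?addr0 //.
by move=> k /negbTE; rewrite dlE eq_sym => ->.
Qed.

Lemma sum_in (H : {group V}) (F : 'I_n -> V) :
  (forall k, F k \in H) -> \sum_(k < n) F k \in H.
Proof.
move=> hF; apply: (big_ind (fun x => x \in H)) => //; first exact: (group1 H).
by move=> x y hx hy; exact: (groupM hx hy).
Qed.

Lemma Rs_sub b (K : {group V}) :
  (forall (k : 'I_n) x, dvv (L - b k.+1) x -> dl k x \in K) -> Rs b \subset K.
Proof.
move=> h; apply/subsetP => g; rewrite inRs => /forallP hg.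
by rewrite (dl_sum g); apply: sum_in => k; apply: h.
Qed.

Lemma GE : Ggrp p n lam = Rs lam :> {set V}.
Proof.
have -> : (Ggrp p n lam : {set V}) = (<<[set gen_e p n lam i | i : 'I_n]>>)%g by [].
apply/eqP; rewrite eqEsubset; apply/andP; split.
  rewrite (@gen_subG _ _ (Rg lam)); apply/subsetP => _ /imsetP[k _ ->].
  rewrite inRs /gen_e; apply/forallP => j; rewrite mxE; case: eqP => [->|]; last by rewrite dv0'.
  by rewrite dvR2' ?leq_subr ?Lpos.
apply: Rs_sub => k x hx.
case/dvdnP: hx => q hq.
have -> : dl k x = gen_e p n lam k *+ q.
  apply/matrixP => i j; rewrite mulmxnE !mxE; case: eqP => _; last by rewrite mul0rn.
  by rewrite (zN' x) hq mulnC natrM mulr_natr.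
rewrite -zmodXgE groupX // mem_gen //; apply/imsetP; by exists k.
Qed.


Lemma inG g : (g \in Ggrp p n lam) = (g \in Rs lam).
Proof. by rewrite -GE. Qed.

Definition bnd (b : nat -> nat) := forall k, (1 <= k <= n)%N -> (b k <= lam k)%N.

Lemma Rs_lam b : bnd b -> Rs b \subset Rs lam.
Proof.
move=> hb; apply/subsetP => g; rewrite !inRs => /forallP h; apply/forallP => k.
by apply: (dv_mono _ (h k)); apply: leq_sub2l; apply: hb; rewrite /= ltn_ord.
Qed.

Lemma RsetE b : bnd b -> Rset p n lam b = Rs b.
Proof.
move=> hb; apply/setP => g; rewrite inE inG.
have -> : [forall i : 'I_n, [exists b0 : 'I_(b i.+1).+1, zorder N (g ord0 i) == (p ^ b0)%N]]
   = (g \in Rs b).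
  by rewrite inRs; apply: eq_forallb => i; rewrite (ordE pr Lpos).
case h: (g \in Rs b); rewrite ?andbF // andbT.
exact: (subsetP (Rs_lam hb)).
Qed.

Definition canon (b : nat -> nat) :=
  [/\ forall i, (1 <= i < n)%N -> (b i <= b i.+1)%N,
      forall i, (1 <= i < n)%N -> (b i.+1 + lam i <= b i + lam i.+1)%N & bnd b].

Lemma canon_of b : tuple_le_lam n lam b -> canonical_tuple n lam b -> canon b.
Proof.
move=> hb [h1 h2]; split => // i hi.
  have := h1 i.+1; rewrite /ext0 /=; case: i hi => // i hi; apply; lia.
have := h2 i; have := h1 i.+1; have := lam_lt (i := i) (j := i.+1).
rewrite /ext0 /=; case: i hi => // i hi.
move=> hl hm hg; have := hl isT (ltnSn _) hi; have := hm hi; have := hg ltac:(lia); lia.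
Qed.

Lemma canon_mono b : canon b -> forall k m, (1 <= k)%N -> (k <= m)%N -> (m <= n)%N ->
  (b k <= b m)%N.
Proof.
case=> h1 _ _ k m hk; elim: m => [|m IH]; first by lia.
rewrite leq_eqVlt => /orP[/eqP -> //|hkm] hm.
apply: leq_trans (IH hkm (ltnW hm)) (h1 m _); lia.
Qed.

Lemma canon_gap b : canon b -> forall k m, (1 <= k)%N -> (k <= m)%N -> (m <= n)%N ->
  (b m + lam k <= b k + lam m)%N.
Proof.
case=> h1 h2 h3 k m hk; elim: m => [|m IH]; first by lia.
rewrite leq_eqVlt => /orP[/eqP -> //|hkm] hm.
have := IH hkm (ltnW hm); have := h2 m ltac:(lia); lia.
Qed.

Lemma dv_Mn e s t (z : 'Z_N) : dvv e z -> (t <= e + s)%N -> (t <= L)%N -> dvv t (z *+ (p ^ s)).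
Proof. by move=> hz h1 h2; rewrite -mulr_natl (dv_pow pr Lpos hz). Qed.

Lemma killE' c (z : 'Z_N) : (z *+ (p ^ c) == 0) = dvv (L - c) z.
Proof. exact: (killE pr Lpos). Qed.

Lemma Rs_inv b (cb : canon b) (f : {morphism Ggrp p n lam >-> 'M['Z_N]_(1, n)}) :
  (f @* Ggrp p n lam)%g = Ggrp p n lam -> {in Rs b, forall g, f g \in Rs b}.
Proof.
move=> fG; have [cm cg cbd] := cb.
have hmono := canon_mono cb; have hgap := canon_gap cb.
suff: Rs b \subset (f @*^-1 (Rs b))%g by move=> /subsetP h g /h; rewrite !inE => /andP[].
apply: (@Rs_sub b (f @*^-1 (Rg b))%G) => k x hx.
have ko := ltn_ord k; have bk := cbd k.+1 ko; have lk := lamL k.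
set s := (lam k.+1 - b k.+1)%N.
case/dvdnP: hx => q hq.
set x' : 'Z_N := (q * p ^ (L - lam k.+1))%:R.
have hx' : dl k x' \in Ggrp p n lam.
  by rewrite inG dl_in dvR2' ?leq_subr // dvdn_mull.
have exx : x = x' *+ (p ^ s).
  rewrite (zN' x) hq /x' -[_ *+ (p ^ s)]mulr_natr -natrM -mulnA -expnD; congr ((_ * _)%:R); congr (_ ^ _)%N; lia.
have edl : dl k x = ((dl k x') ^+ (p ^ s))%g by rewrite exx dlMn.
have hxG : dl k x \in Ggrp p n lam by rewrite edl groupX.
rewrite !inE hxG /= edl morphX //.
set y := f (dl k x').
have yG : y \in Rs lam by rewrite -inG -fG mem_morphim.
have y0 : (y *+ (p ^ lam k.+1))%R = 0.
  have -> : y *+ (p ^ lam k.+1) = (y ^+ (p ^ lam k.+1))%g by [].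
  rewrite /y -morphX //.
  have -> : ((dl k x') ^+ (p ^ lam k.+1))%g = dl k (x' *+ (p ^ lam k.+1)) by rewrite dlMn.
  have /eqP -> : x' *+ (p ^ lam k.+1) == 0.
    by rewrite killE' dvR2' ?leq_subr // dvdn_mull.
  by rewrite dl0; apply: (morph1 f).
have -> : (y ^+ (p ^ s))%g = y *+ (p ^ s) by []. apply/forallP => m; rewrite mulmxnE.
have ym : dvv (L - lam k.+1) (y ord0 m).
  by rewrite -killE' -mulmxnE y0 mxE.
have ym2 : dvv (L - lam m.+1) (y ord0 m) by move: yG; rewrite inRs => /forallP.
have mo := ltn_ord m; have lm := lamL m; have bm := cbd m.+1 mo.
case: (leqP k m) => km.
  have := hmono k.+1 m.+1 isT km ltac:(lia) => hb.
  apply: dv_Mn ym _ _; lia.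
have := hgap m.+1 k.+1 isT ltac:(lia) ltac:(lia) => hg.
apply: dv_Mn ym2 _ _; lia.
Qed.

Lemma Rs_char b : canon b -> (Rs b \char Ggrp p n lam)%g.
Proof.
move=> cb; apply/(@charP _ (Rg b) (Ggrp p n lam)); split.
  by apply/subsetP => g hg; rewrite inG (subsetP (Rs_lam _) _ hg) //; case: cb.
move=> f injf fG.
have sub : Rs b \subset Ggrp p n lam.
  by apply/subsetP => g hg; rewrite inG (subsetP (Rs_lam _) _ hg) //; case: cb.
apply/eqP; rewrite eqEcard card_injm // leqnn andbT.
apply/subsetP => _ /morphimP[g _ hg ->]; exact: Rs_inv.
Qed.


Definition tv (k m : 'I_n) (c : 'Z_N) (g : V) : V := g + dl m (c * g ord0 k).

Lemma tvM k m c : {in Ggrp p n lam &, {morph tv k m c : x y / (x * y)%g}}.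
Proof.
move=> x y _ _; rewrite /tv /= !zmodMgE mxE mulrDr dlD.
by rewrite addrACA.
Qed.

Lemma tv_K (K : {group V}) (k m : 'I_n) (c : 'Z_N) :
  (K \char Ggrp p n lam)%g ->
  (forall x, dvv (L - lam k.+1) x -> dvv (L - lam m.+1) (c * x)) ->
  (forall x y, x + (if k == m then c * x else 0) = y + (if k == m then c * y else 0) -> x = y) ->
  forall h, h \in K -> dl m (c * h ord0 k) \in K.
Proof.
move=> chK hc hU h hK.
pose f := @Morphism _ _ (Ggrp p n lam) (tv k m c) (@tvM k m c).
have sKG : K \subset Ggrp p n lam by case/andP: chK.
have tvG : forall g, g \in Ggrp p n lam -> tv k m c g \in Ggrp p n lam.
  move=> g; rewrite !inG !inRs => /forallP hg; apply/forallP => j.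
  rewrite /tv mxE dlE; case: eqP => [->|_]; last by rewrite addr0 hg.
  by rewrite dvD' ?leq_subr ?hg ?hc.
have injf : ('injm f)%g.
  apply/injmP => x y _ _ /= e.
  have := congr1 (fun g : V => g ord0 k) e; rewrite /tv /= !mxE => /(hU _ _) ek.
  by move: e; rewrite /tv ek => /addIr.
have fG : (f @* Ggrp p n lam)%g = Ggrp p n lam.
  apply/eqP; rewrite eqEcard card_injm // leqnn andbT.
  by apply/subsetP => _ /morphimP[g _ hg ->]; apply: tvG.
have := (charP _ _ chK).2 f injf fG => fK.
have : f h \in K by rewrite -fK mem_morphim // (subsetP sKG).
move=> /groupM /(_ (groupVr hK)).
by rewrite /= /tv zmodVgE zmodMgE addrAC subrr add0r.
Qed.

End Vec.

End PartB.

Module PartC.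
Import PartA.
Import PartB.
Set Implicit Arguments. Unset Strict Implicit. Unset Printing Implicit Defensive.

Local Notation nondegenerate := Pilot.Defs.nondegenerate.
Local Notation degenerate := Pilot.Defs.degenerate.
Section Comb.
Variables (n : nat) (lam a : nat -> nat).
Hypothesis lamI : forall i, 1 <= i < n -> lam i < lam i.+1.
Hypothesis cm : forall i, 1 <= i < n -> a i <= a i.+1.
Hypothesis cg : forall i, 1 <= i < n -> a i.+1 + lam i <= a i + lam i.+1.

Lemma e0 j : 0 < j -> ext0 a j = a j.
Proof. by case: j. Qed.

Lemma nd_facts k : 1 <= k <= n -> nondegenerate n lam a k ->
  ext0 a k.-1 < a k /\ (k < n -> a k.+1 + lam k < a k + lam k.+1).
Proof.
move=> hk nd; split.
  have : ext0 a k.-1 <= a k.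
    case: k hk {nd} => // -[|k] hk //=; apply: cm; lia.
  rewrite leq_eqVlt => /orP[/eqP e|//]; exfalso; apply: nd; left.
  by rewrite e0 ?e; lia.
move=> kn; have := cg (i := k) ltac:(lia); have := cm (i := k) ltac:(lia); have := lamI (i := k) ltac:(lia).
move=> h1 h2 h3; case: (ltngtP (a k.+1 + lam k) (a k + lam k.+1)) => // h4.
- lia.
- exfalso; apply: nd; right; split; lia.
Qed.

Section Uniq.
Variable k : nat.
Hypothesis hk : 1 <= k <= n.
Hypothesis D : forall j, 1 <= j <= n -> j <> k -> degenerate n lam a j.

Lemma up_E j : k < j <= n -> a j = a j.-1.
Proof.
move: {2}(n - j) (erefl (n - j)) => t; elim: t j => [|t IH] j ht hj.
  case: (D (j := j) ltac:(lia) ltac:(lia)) => [E|[hjn T]]; last by lia.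
  by move: E; rewrite !e0; lia.
case: (D (j := j) ltac:(lia) ltac:(lia)) => [E|[hjn T]].
  by move: E; rewrite !e0; lia.
have := IH j.+1 ltac:(lia) ltac:(lia); have := lamI (i := j) ltac:(lia); simpl; lia.
Qed.

Lemma up_eq m : k <= m <= n -> a m = a k.
Proof.
elim: m => [|m IH] hm; first by lia.
case: (ltngtP k m.+1) => [lt|gt|<- //]; last by lia.
rewrite (up_E (j := m.+1)) /=; [apply: IH|]; lia.
Qed.

Lemma dn_T j : 1 <= j -> j < k -> 0 < a j -> a j.+1 + lam j = a j + lam j.+1.
Proof.
elim: j => [|j IH] // hj1 hjk ha.
case: (D (j := j.+1) ltac:(lia) ltac:(lia)) => [E|[hjn T]].
  move: E; rewrite e0 //=; case: j IH hj1 hjk ha => [|j] IH hj1 hjk ha /= E; first by lia.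
  have := IH isT ltac:(lia) ltac:(lia); have := lamI (i := j.+1) ltac:(lia); lia.
have := lamI (i := j.+1) ltac:(lia); lia.
Qed.

Lemma dn_eq j : 1 <= j <= k -> 0 < a j -> a k + lam j = a j + lam k.
Proof.
move: {2}(k - j) (erefl (k - j)) => t; elim: t j => [|t IH] j ht hj ha.
  by have -> : j = k by lia.
have := dn_T (j := j) ltac:(lia) ltac:(lia) ha; have := lamI (i := j) ltac:(lia) => h1 h2.
have := IH j.+1 ltac:(lia) ltac:(lia) ltac:(lia); lia.
Qed.

End Uniq.

Lemma ex_step j : 1 <= j <= n -> 0 < a j ->
  exists i, [/\ 1 <= i <= j & ext0 a i.-1 < a i].
Proof.
elim: j => [|j IH] // hj ha.
case: (ltnP (ext0 a j) (a j.+1)) => h; first by exists j.+1; split => //; lia.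
case: j IH hj ha h => [|j] IH hj ha h; first by move: h; rewrite /ext0; lia.
have [i [hi1 hi2]] := IH ltac:(lia) ltac:(move: h; rewrite e0 //; lia).
by exists i; split => //; lia.
Qed.

Lemma ex_nd m : 1 <= m <= n -> 0 < a m ->
  exists i, 1 <= i <= n /\ nondegenerate n lam a i.
Proof.
move=> hm ha.
pose P i := (1 <= i <= n) && (ext0 a i.-1 < a i).
have exP : exists i, P i.
  have [i [hi1 hi2]] := ex_step hm ha; exists i; rewrite /P hi2 andbT; lia.
have bP : forall i, P i -> i <= n by move=> i /andP[]; lia.
case: (ex_maxnP exP bP) => i /andP[hi1 hi2] mx.
exists i; split => //; case => [E|[hin T]].
  by move: E hi2; rewrite e0; lia.
have : ~~ P i.+1 by apply/negP => /mx; lia.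
rewrite /P /= e0; last by lia.
have := cm (i := i) ltac:(lia); have := lamI (i := i) ltac:(lia).
move=> h1 h2 /negP hP; apply: hP; apply/andP; split; lia.
Qed.

End Comb.

End PartC.

Module PartD.
Import PartA.
Import PartB.
Import PartC.
Set Implicit Arguments. Unset Strict Implicit. Unset Printing Implicit Defensive.
Import GRing.Theory FinRing.Theory.
Local Notation nondegenerate := Pilot.Defs.nondegenerate.
Local Notation degenerate := Pilot.Defs.degenerate.

Lemma ringcomp N (P Q S E Qi : 'Z_N) : (Qi * Q = 1 -> P * (S * Qi) * (Q * E) = S * (P * E))%R.
Proof.
move=> h; transitivity (S * (P * E) * (Qi * Q))%R; first by ring.
by rewrite h mulr1.
Qed.

Section Main.
Variables (p n : nat) (lam a : nat -> nat).
Hypothesis pr : prime p.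
Hypothesis p2 : p != 2.
Hypothesis lam1 : 0 < lam 1.
Hypothesis lamI : forall i, 1 <= i < n -> lam i < lam i.+1.
Hypothesis npos : 0 < n.
Hypothesis ha : tuple_le_lam n lam a.
Hypothesis hc : canonical_tuple n lam a.

Local Notation L := (lam n).
Local Notation N := (p ^ lam n).
Local Notation dvv := (@dv p L).
Local Notation V := ('M['Z_N]_(1, n)).

Let LposM : 0 < lam n := Lpos pr lam1 lamI npos.
Let cb : canon n lam a := canon_of pr lam1 lamI npos ha hc.
Let cm i : 1 <= i < n -> a i <= a i.+1. Proof. by case: cb => h _ _; apply: h. Qed.
Let cg i : 1 <= i < n -> a i.+1 + lam i <= a i + lam i.+1. Proof. by case: cb => _ h _; apply: h. Qed.
Let cbd : bnd n lam a. Proof. by case: cb. Qed.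
Local Notation Rs' := (Rs p n lam).
Local Notation dl' := (@dl p n lam).
Let lamL' := lamL pr lam1 lamI npos.
Let lam_lt' := lam_lt pr lam1 lamI npos.

Definition dec (b : nat -> nat) (i : nat) := fun j => if j == i then (b j).-1 else b j.

Lemma dec_bnd i : bnd n lam (dec a i).
Proof. move=> j hj; rewrite /dec; have := cbd hj; case: eqP => _; lia. Qed.

Lemma dec_canon k : 1 <= k <= n -> nondegenerate n lam a k -> canon n lam (dec a k).
Proof.
move=> hk nd; have [hlt hnx] := nd_facts lamI cm cg hk nd.
split; last exact: dec_bnd.
  move=> i hi; have h1 := cm hi.
  have f1 : i.+1 = k -> a i < a i.+1 by move=> e; move: hlt; rewrite -e /= e0 //; lia.
  rewrite /dec; case: (i =P k) => [ei|ni]; case: (i.+1 =P k) => [ei1|ni1]; lia.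
move=> i hi; have h1 := cm hi; have h2 := cg hi; have h3 := lamI hi.
have f1 : i.+1 = k -> a i < a i.+1 by move=> e; move: hlt; rewrite -e /= e0 //; lia.
have f2 : i = k -> a i.+1 + lam i < a i + lam i.+1 by move=> e; rewrite e; apply: hnx; lia.
rewrite /dec; case: (i =P k) => [ei|ni]; case: (i.+1 =P k) => [ei1|ni1]; lia.
Qed.

Lemma wit (k : 'I_n) : 0 < a k.+1 ->
  [/\ dl' k ((p ^ (L - a k.+1))%:R)%R \in Rs' a,
      dl' k ((p ^ (L - a k.+1))%:R)%R \notin Rs' (dec a k.+1) &
      dl' k ((p ^ (L - a k.+1))%:R)%R != 1%g].
Proof.
move=> hak; have bk : a k.+1 <= lam k.+1 by apply: cbd; rewrite /= ltn_ord. have lk := lamL' k; split.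
- by rewrite dl_in; apply: (dvR2 pr LposM) => //; lia.
- rewrite dl_in /dec eqxx (dvR pr LposM); last lia.
  rewrite dvdn_Pexp2l ?prime_gt1 //; lia.
- apply/eqP => e; have := congr1 (fun g : V => g ord0 k) e.
  rewrite dlE eqxx mxE => /eqP; rewrite (natZ0 pr LposM) dvdn_Pexp2l ?prime_gt1 //; lia.
Qed.

Lemma unit_q (q : nat) : ~~ (p %| q) -> ((q%:R : 'Z_N) \is a GRing.unit)%R.
Proof.
move=> h; rewrite unitZpE ?(N_gt1 pr LposM) // coprime_pexpl //.
by rewrite prime_coprime.
Qed.

Lemma key (k : 'I_n)
  (D : forall j, 1 <= j <= n -> j <> k.+1 -> degenerate n lam a j)
  (K : {group V}) :
  (K \char Ggrp p n lam)%g -> K \subset Rs' a -> ~~ (K \subset Rs' (dec a k.+1)) ->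
  Rs' a \subset K.
Proof.
move=> chK sK /subsetPn [g gK gnd].
have gRa := subsetP sK g gK; move: gRa; rewrite inE => /forallP gRa.
have ko := ltn_ord k; have hk : 1 <= k.+1 <= n by [].
have bk : a k.+1 <= lam k.+1 by apply: cbd.
have lk := lamL' k.
set x0 := g ord0 k.
have hx0 : dvv (L - a k.+1) x0 := gRa k.
have nx0 : ~~ dvv (L - (a k.+1).-1) x0.
  apply/negP => h; move: gnd; rewrite inE => /negP; apply; apply/forallP => j.
  rewrite /dec; case: eqP => [e|ne]; last exact: gRa.
  by have -> : j = k by apply: ord_inj; case: e.
have ak1 : 0 < a k.+1.
  case: (posnP (a k.+1)) => [e|//]; move: nx0 hx0; rewrite e /= => /negP; done.
case/dvdnP: hx0 => q hq.
have cq : ~~ (p %| q).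
  apply/negP => /dvdnP [r hr]; move/negP: nx0; apply; rewrite /dv hq hr.
  have -> : L - (a k.+1).-1 = (L - a k.+1).+1 by lia.
  by rewrite expnS -mulnA dvdn_mull.
have uq := unit_q cq.
have ex0 : x0 = ((q * p ^ (L - a k.+1))%:R)%R by rewrite [LHS](zN x0) hq.
have u2 : ((2%:R : 'Z_N) \is a GRing.unit)%R.
  apply: unit_q; rewrite (dvdn_prime2 pr (isT : prime 2)); exact: p2.
have dk : dl' k x0 \in K.
  have hc1 : forall x, dvv (L - lam k.+1) x -> dvv (L - lam k.+1) (1 * x)%R.
    by move=> x; rewrite mul1r.
  have hU1 : forall x y : 'Z_N,
      (x + (if k == k then 1 * x else 0) = y + (if k == k then 1 * y else 0))%R -> x = y.
    move=> x y; rewrite eqxx !mul1r -!mulr2n -[(x *+ 2)%R]mulr_natl -[(y *+ 2)%R]mulr_natl; exact: (mulrI u2).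
  by have := tv_K pr lam1 lamI npos chK hc1 hU1 gK; rewrite mul1r.
apply: Rs_sub => m y hy.
have mo := ltn_ord m; have bm : a m.+1 <= lam m.+1 by apply: cbd.
have lm := lamL' m.
case: (posnP (a m.+1)) => am.
  move: hy; rewrite am subn0 => /(dvL pr LposM) ->; rewrite dl0; exact: group1.
case/dvdnP: hy => s hs.
have ey : y = ((s * p ^ (L - a m.+1))%:R)%R by rewrite [LHS](zN y) hs.
case: (m =P k) => [emk|nmk].
  subst m.
  have e1 : (x0 * ((p ^ 0)%:R * (s%:R * (q%:R)^-1)) = y)%R.
    by rewrite ey ex0 mulrC !natrM ringcomp ?mulVr // expn0 mul1r.
  rewrite -e1 (zN ((p ^ 0)%:R * (s%:R * (q%:R)^-1))%R) mulr_natr dlMn.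
  by rewrite -zmodXgE groupX.
set d := lam k.+1 - lam m.+1.
have [e1 e2] : L - a m.+1 = d + (L - a k.+1) /\ L - lam m.+1 <= (L - lam k.+1) + d.
  case: (ltngtP k m) => [km|mk|kme]; last by case: nmk; apply: ord_inj.
    have := @up_eq n lam a lamI k.+1 hk D m.+1 ltac:(lia).
    have := lam_lt' (i := k.+1) (j := m.+1) isT km mo; rewrite /d; lia.
  have := @dn_eq n lam a lamI k.+1 hk D m.+1 ltac:(lia) am.
  have := lam_lt' (i := m.+1) (j := k.+1) isT mk ko; rewrite /d; lia.
set c : 'Z_N := ((p ^ d)%:R * (s%:R * (q%:R)^-1))%R.
have ecy : (c * x0)%R = y.
  rewrite ey ex0 /c natrM ringcomp ?mulVr // -natrM -expnD -e1 mulrC natrM.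
  by rewrite mulrC.
have hc2 : forall x, dvv (L - lam k.+1) x -> dvv (L - lam m.+1) (c * x)%R.
  move=> x hx; rewrite /c -mulrA.
  apply: (dv_pow pr LposM) e2 _; first apply: (dvM pr LposM) hx; lia.
have hU2 : forall x z : 'Z_N,
    (x + (if k == m then c * x else 0) = z + (if k == m then c * z else 0))%R -> x = z.
  have hkm : (k == m) = false by apply/eqP => e; apply: nmk; rewrite e.
  by move=> x z; rewrite hkm !addr0.
by have := tv_K pr lam1 lamI npos chK hc2 hU2 dk; rewrite dlE eqxx ecy.
Qed.

End Main.

End PartD.

Module PartE.
Import PartA.
Import PartB.
Import PartC.
Import PartD.
Set Implicit Arguments. Unset Strict Implicit. Unset Printing Implicit Defensive.
Import GRing.Theory FinRing.Theory.
Local Notation nondegenerate := Pilot.Defs.nondegenerate.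
Local Notation degenerate := Pilot.Defs.degenerate.

Section Fin.
Variables (p n : nat) (lam a : nat -> nat).
Hypothesis pr : prime p.
Hypothesis p2 : p != 2.
Hypothesis lam1 : 0 < lam 1.
Hypothesis lamI : forall i, 1 <= i < n -> lam i < lam i.+1.
Hypothesis npos : 0 < n.
Hypothesis ha : tuple_le_lam n lam a.
Hypothesis hc : canonical_tuple n lam a.

Local Notation L := (lam n).
Local Notation N := (p ^ lam n).
Local Notation V := ('M['Z_N]_(1, n)).
Local Notation Rs' := (Rs p n lam).
Local Notation dl' := (@dl p n lam).

Let LposM : 0 < lam n := Lpos pr lam1 lamI npos.
Let cb : canon n lam a := canon_of pr lam1 lamI npos ha hc.
Let cm i : 1 <= i < n -> a i <= a i.+1. Proof. by case: cb => h _ _; apply: h. Qed.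
Let cg i : 1 <= i < n -> a i.+1 + lam i <= a i + lam i.+1. Proof. by case: cb => _ h _; apply: h. Qed.
Let cbd : bnd n lam a. Proof. by case: cb. Qed.
Let RG b : {group V} := Group (Rs_group pr lam1 lamI npos b).
Let HR : Rset p n lam a = Rs' a := RsetE pr lam1 lamI npos cbd.

Lemma toOrd i : 1 <= i <= n -> exists k : 'I_n, i = k.+1.
Proof. move=> hi; have hk : i.-1 < n by lia. by exists (Ordinal hk) => /=; lia. Qed.

Lemma sub_dec i : Rs' (dec a i) \subset Rs' a.
Proof.
apply/subsetP => g; rewrite !inE => /forallP h; apply/forallP => t.
by apply: (dv_mono _ (h t)); rewrite /dec; case: eqP => _; lia.
Qed.

Lemma pos_nd (k : 'I_n) : nondegenerate n lam a k.+1 -> 0 < a k.+1.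
Proof.
move=> nd; have [h _] := nd_facts lamI cm cg (k := k.+1) (ltn_ord k) nd; lia.
Qed.

Lemma proper_dec (k : 'I_n) : nondegenerate n lam a k.+1 -> RG (dec a k.+1) \proper Rs' a.
Proof.
move=> nd; have [w1 w2 _] := wit pr p2 lam1 lamI npos ha hc (pos_nd nd).
rewrite properE sub_dec /=; apply/negP => /subsetP /(_ _ w1); exact/negP.
Qed.

Lemma char_dec (k : 'I_n) : nondegenerate n lam a k.+1 -> (Rs' (dec a k.+1) \char Ggrp p n lam)%g.
Proof.
move=> nd; apply: (Rs_char pr lam1 lamI npos).
by apply: (dec_canon pr p2 lam1 lamI npos ha hc) => //; rewrite /= ltn_ord.
Qed.

Lemma back : unique_nondegenerate n lam a -> char_join_irreducible (Ggrp p n lam) (Rset p n lam a).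
Proof.
case=> i [hi [nd uq]]; have [k ek] := toOrd hi; subst i.
have [w1 w2 w3] := wit pr p2 lam1 lamI npos ha hc (pos_nd nd).
have D : forall j, 1 <= j <= n -> j <> k.+1 -> degenerate n lam a j.
  by move=> j hj ne; apply: NNPP => nd'; exact: ne (uq j hj nd').
rewrite HR; split; [split|split].
- exact: Rs_group pr lam1 lamI npos a.
- exact: (Rs_char pr lam1 lamI npos cb).
- apply/eqP => e; move: w1; rewrite e inE; exact/negP.
case=> K [K' [chK chK' pK pK' join]].
have sub : forall H : {group V}, (H \char Ggrp p n lam)%g -> H \proper Rs' a ->
    H \subset RG (dec a k.+1).
  move=> H chH pH; case: (boolP (H \subset Rs' (dec a k.+1))) => // nH.
  have := key pr p2 lam1 lamI npos ha hc D chH (proper_sub pH) nH.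
  by move: pH; rewrite properE => /andP[_ /negP].
have := join (RG (dec a k.+1)) (char_dec nd) (sub _ chK pK) (sub _ chK' pK').
by move=> /subsetP /(_ _ w1); apply/negP.
Qed.

Lemma split_mem (k : 'I_n) g : g \in Rs' a ->
  (g - dl' k (g ord0 k))%R \in Rs' (dec a k.+1).
Proof.
rewrite !inE => /forallP h; apply/forallP => t; rewrite !mxE.
case: (t =P k) => [->|ne]; first by rewrite subrr dv0.
rewrite subr0 /dec; case: eqP => [e|_]; last exact: h.
by case: ne; apply: ord_inj; case: e.
Qed.

Lemma dl_mem (k : 'I_n) j g : g \in Rs' a -> j <> k.+1 ->
  dl' k (g ord0 k) \in Rs' (dec a j).
Proof.
rewrite inE => /forallP h ne; rewrite dl_in /dec; case: eqP => [e|_]; last exact: h.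
by case: ne.
Qed.

Lemma forth : char_join_irreducible (Ggrp p n lam) (Rset p n lam a) -> unique_nondegenerate n lam a.
Proof.
rewrite HR; case=> [[gH chH] [n1 nj]].
have [m [hm am]] : exists m, 1 <= m <= n /\ 0 < a m.
  apply: NNPP => hno; move/negP: n1; apply; apply/eqP.
  apply/eqP; rewrite eqEsubset; apply/andP; split; last first.
    by rewrite sub1set; exact: (group1 (RG a)).
  apply/subsetP => g; rewrite inE => /forallP h; rewrite inE; apply/eqP.
  apply/matrixP => i t; rewrite (ord1 i) mxE; apply: (dvL pr LposM).
  have := h t; have := ltn_ord t => ht.
  have -> : a t.+1 = 0 by apply/eqP; rewrite -leqn0 leqNgt; apply/negP => hp; apply: hno; exists t.+1; lia.
  by rewrite subn0.
have [i [hi ndi]] := ex_nd lamI cm hm am.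
exists i; split => //; split => // j hj ndj.
apply: NNPP => ne; apply: nj.
have [ki eki] := toOrd hi; have [kj ekj] := toOrd hj; subst i j.
exists (RG (dec a ki.+1)), (RG (dec a kj.+1)); split.
- exact: char_dec ndi.
- exact: char_dec ndj.
- exact: proper_dec ndi.
- exact: proper_dec ndj.
move=> M chM sKM sLM; apply/subsetP => g hg.
have -> : g = ((g - dl' ki (g ord0 ki))%R * dl' ki (g ord0 ki))%g.
  by rewrite zmodMgE subrK.
apply: groupM.
  exact: (subsetP sKM _ (split_mem _ hg)).
apply: (subsetP sLM); apply: dl_mem hg _; exact: ne.
Qed.

End Fin.

Lemma n0case p lam a :
  char_join_irreducible (Ggrp p 0 lam) (Rset p 0 lam a) <-> unique_nondegenerate 0 lam a.
Proof.
split; last by case=> i [hi _]; lia.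
case=> _ [n1 _]; exfalso; move/negP: n1; apply; apply/eqP/setP => g.
rewrite (thinmx0 g) !inE.
have -> : (0 : amb p 0 lam)%R = 1%g by [].
rewrite group1 eqxx /=; apply/forallP; case=> i hi; by [].
Qed.

End PartE.

Import PartA PartB PartC PartD PartE.

Theorem mainTheorem15 (p n : nat) (lam a : nat -> nat) :
  prime p -> p != 2 ->
  0 < lam 1 ->
  (forall i, 1 <= i < n -> lam i < lam i.+1) ->
  tuple_le_lam n lam a ->
  canonical_tuple n lam a ->
  char_join_irreducible (Ggrp p n lam) (Rset p n lam a) <->
  unique_nondegenerate n lam a.
Proof.
move=> pr p2 lam1 lamI ha hc.
case: (posnP n) => [n0|npos].
  by subst n; exact: n0case.
split.
  exact: (forth pr p2 lam1 lamI npos ha hc).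
exact: (back pr p2 lam1 lamI npos ha hc).
Qed.
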